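(* Suppose that at the unconstrained Nash equilibrium only SP 2's constraint is violated, i.e., $B_{1,S}^{\text{NE}}\ge B_{1,S}^0$ and $B_{2,S}^{\text{NE}}<B_{2,S}^0$. Then the Nash equilibrium with the regulatory constraints is of one of the following two types: Type I. Both SPs allocate exactly the required amount to small-cells, i.e., $B_{1,S}=B_{1,S}^0$, $B_{2,S}=B_{2,S}^0$. Type II. Only SP 2 allocates exactly the required minimum amount of bandwidth to small-cells, i.e., $B_{1,S}>B_{1,S}^0$, $B_{2,S}=B_{2,S}^0$.
   Context: Two competing service providers (SPs), $i=1,2$, each have total licensed bandwidth $B_i$, split into macro-cell bandwidth $B_{i,M}$ and small-cell bandwidth $B_{i,S}$ with $B_{i,M}+B_{i,S}\le B_i$, $B_{i,M}\ge 0$, and regulatory constraint $B_{i,S}\ge B_{i,S}^0$. Macro-cells of SP $i$ provide rate $B_{i,M}R_0$, small-cells provide rate $\lambda_S B_{i,S}R_0$ with $\lambda_S>1$. Mobile users (density $N_m$) can only use macro-cells (with priority); fixed users (density $N_f$) can use macro- or small-cells of either SP. All users have utility $u(r)=r^{1-\alpha}/(1-\alpha)$, $\alpha\in(0,1)$, with demand $D(p)=(1/p)^{1/\alpha}$ at price $p$ per unit rate; users choose the lowest-priced service and fill its capacity. Each SP maximizes its revenue $p_{i,M}K_{i,M}D(p_{i,M})+p_{i,S}K_{i,S}D(p_{i,S})$ in a two-stage game: bandwidth splits first, then prices; the price equilibrium for any fixed bandwidth allocation is the market-clearing price. Without the regulatory constraints there is a unique Nash equilibrium with $B_{i,S}^{\text{NE}}=\frac{N_f\lambda_S^{1/\alpha-1}B_i}{N_f\lambda_S^{1/\alpha-1}+N_m}$,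 $B_{i,M}^{\text{NE}}=\frac{N_mB_i}{N_f\lambda_S^{1/\alpha-1}+N_m}$; with the constraints a Nash equilibrium exists and is unique. *)

(* Defs.v *)
From Stdlib Require Import Reals.
Open Scope R_scope.

(* Market-clearing price of a pool of users of density N sharing a total
   capacity C : the p with N * D(p) = C, i.e. p = (N/C)^alpha. *)
Definition clearing_price (alpha N C : R) : R := Rpower (N / C) alpha.

(* Total macro capacity CM = (B1M+B2M) R0, total small-cell capacity
   CS = lam (B1S+B2S) R0.
   - If N_m / CM >= N_f / CS (written without division: N_f CM <= N_m CS),
     mobile users clear the macro market at pM = (N_m/CM)^alpha and fixed users
     clear the small-cell market at pS = (N_f/CS)^alpha (pM >= pS, so fixed users
     indeed prefer small cells).
   - Otherwise fixed users also use macro-cells and a single price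
     p = ((N_m+N_f)/(CM+CS))^alpha clears the whole market.
   Revenue = price * (rate sold) = price * capacity (every capacity is filled). *)
Definition revenue (Nm Nf lam alpha R0 : R) (BiM BiS BjM BjS : R) : R :=
  let CM := (BiM + BjM) * R0 in
  let CS := lam * (BiS + BjS) * R0 in
  if Rle_dec (Nf * CM) (Nm * CS) then
    clearing_price alpha Nm CM * (BiM * R0) + clearing_price alpha Nf CS * (lam * BiS * R0)
  else
    clearing_price alpha (Nm + Nf) (CM + CS) * (BiM * R0 + lam * BiS * R0).

Definition feasible (Bi BiS0 BiM BiS : R) : Prop :=
  0 <= BiM /\ BiS0 <= BiS /\ BiM + BiS <= Bi.

Definition constrained_NE (Nm Nf lam alpha R0 B1 B2 B1S0 B2S0 : R)
  (B1M B1S B2M B2S : R) : Prop :=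
  feasible B1 B1S0 B1M B1S /\ feasible B2 B2S0 B2M B2S /\
  (forall B1M' B1S', feasible B1 B1S0 B1M' B1S' ->
     revenue Nm Nf lam alpha R0 B1M' B1S' B2M B2S
     <= revenue Nm Nf lam alpha R0 B1M B1S B2M B2S) /\
  (forall B2M' B2S', feasible B2 B2S0 B2M' B2S' ->
     revenue Nm Nf lam alpha R0 B2M' B2S' B1M B1S
     <= revenue Nm Nf lam alpha R0 B2M B2S B1M B1S).

Definition BS_NE (Nm Nf lam alpha Bi : R) : R :=
  Nf * Rpower lam (1 / alpha - 1) * Bi / (Nf * Rpower lam (1 / alpha - 1) + Nm).

(* Main.v *)
Require Import Defs.
From Stdlib Require Import Reals Lra Psatz.
Open Scope R_scope.

Lemma P_pos a N C : 0 < clearing_price a N C.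
Proof. unfold clearing_price, Rpower. apply exp_pos. Qed.

Lemma ln_le_m1 z : 0 < z -> ln z <= z - 1.
Proof. intro Hz. pose proof (exp_ineq1_le (ln z)). rewrite exp_ln in H; lra. Qed.

Lemma bern a N C C' : 0 <= a -> 0 < N -> 0 < C -> 0 < C' ->
  clearing_price a N C * (1 - a * (C' - C) / C) <= clearing_price a N C'.
Proof.
  intros Ha HN HC HC'. unfold clearing_price, Rpower.
  assert (E : N / C' = (N / C) * / (C' / C)) by (field; lra).
  rewrite E, ln_mult, ln_Rinv, Rmult_plus_distr_l, exp_plus.
  2: apply Rdiv_lt_0_compat; lra.
  2: apply Rdiv_lt_0_compat; lra.
  2: apply Rinv_0_lt_compat, Rdiv_lt_0_compat; lra.
  apply Rmult_le_compat_l. left; apply exp_pos.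
  pose proof (exp_ineq1_le (a * - ln (C' / C))).
  pose proof (ln_le_m1 (C'/C) ltac:(apply Rdiv_lt_0_compat; lra)).
  assert (a * (C' - C) / C = a * (C'/C - 1)) by (field; lra).
  rewrite H1. nra.
Qed.


Lemma shift_R1 Nm Nf lam a R0 m s m' s' X Y d :
  0 < Nm -> 0 < Nf -> 0 < lam -> 0 <= a -> 0 < R0 ->
  X = m + m' -> Y = s + s' -> 0 < X -> 0 < Y ->
  0 <= m + d -> 0 <= s - d -> 0 < X + d -> 0 < Y - d ->
  Nf * (X * R0) <= Nm * (lam * Y * R0) ->
  Nf * ((X + d) * R0) <= Nm * (lam * (Y - d) * R0) ->
  let pM := clearing_price a Nm (X * R0) in
  let pS := clearing_price a Nf (lam * Y * R0) in
  revenue Nm Nf lam a R0 m s m' s'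
   + d * R0 * (pM * (X - a * m) / X - pS * lam * (Y - a * s) / Y)
   - d * d * R0 * (a * (pM / X + pS * lam / Y))
  <= revenue Nm Nf lam a R0 (m + d) (s - d) m' s'.
Proof.
  intros HNm HNf Hlam Ha HR0 HX HY HX0 HY0 Hm Hs HXd HYd Hr1 Hr2 pM pS.
  unfold revenue.
  replace (m + d + m') with (X + d) by lra.
  replace (s - d + s') with (Y - d) by lra.
  rewrite <- HX, <- HY.
  destruct (Rle_dec (Nf * (X * R0)) (Nm * (lam * Y * R0))) as [_|C]; [|lra].
  destruct (Rle_dec (Nf * ((X + d) * R0)) (Nm * (lam * (Y - d) * R0))) as [_|C]; [|lra].
  pose proof (bern a Nm (X * R0) ((X + d) * R0) Ha HNm ltac:(repeat apply Rmult_lt_0_compat; lra) ltac:(repeat apply Rmult_lt_0_compat; lra)) as B1.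
  pose proof (bern a Nf (lam * Y * R0) (lam * (Y - d) * R0) Ha HNf ltac:(repeat apply Rmult_lt_0_compat; lra) ltac:(repeat apply Rmult_lt_0_compat; lra)) as B2.
  fold pM in B1. fold pS in B2.
  assert (E1 : pM * (1 - a * ((X + d) * R0 - X * R0) / (X * R0)) = pM * (1 - a * d / X)) by (field; repeat split; lra).
  assert (E2 : pS * (1 - a * (lam * (Y - d) * R0 - lam * Y * R0) / (lam * Y * R0)) = pS * (1 + a * d / Y)) by (field; repeat split; lra).
  rewrite E1 in B1. rewrite E2 in B2.
  apply Rle_trans with (pM * (1 - a * d / X) * ((m + d) * R0) + pS * (1 + a * d / Y) * (lam * (s - d) * R0)).
  - apply Req_le. subst X Y. unfold pM, pS. field. split; lra.
  - apply Rplus_le_compat.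
    + apply Rmult_le_compat_r; [nra|exact B1].
    + apply Rmult_le_compat_r; [|exact B2].
      apply Rmult_le_pos; [|lra]. apply Rmult_le_pos; lra.
Qed.


Lemma small4 p1 p2 p3 p4 : 0 < p1 -> 0 < p2 -> 0 < p3 -> 0 < p4 ->
  exists d, 0 < d /\ d <= p1 /\ d <= p2 /\ d <= p3 /\ d <= p4.
Proof.
  intros. exists (Rmin (Rmin p1 p2) (Rmin p3 p4)).
  pose proof (Rmin_l p1 p2). pose proof (Rmin_r p1 p2).
  pose proof (Rmin_l p3 p4). pose proof (Rmin_r p3 p4).
  pose proof (Rmin_l (Rmin p1 p2) (Rmin p3 p4)). pose proof (Rmin_r (Rmin p1 p2) (Rmin p3 p4)).
  assert (0 < Rmin p1 p2) by (apply Rmin_pos; lra).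
  assert (0 < Rmin p3 p4) by (apply Rmin_pos; lra).
  assert (0 < Rmin (Rmin p1 p2) (Rmin p3 p4)) by (apply Rmin_pos; lra).
  lra.
Qed.

Lemma pool_gain a N T c d : 0 < a < 1 -> 0 < N -> 0 < T -> 0 <= c <= T -> 0 < d ->
  a * d < (1 - a) * T ->
  clearing_price a N T * c < clearing_price a N (T + d) * (c + d).
Proof.
  intros Ha HN HT Hc Hd Hs.
  pose proof (bern a N T (T + d) ltac:(lra) HN HT ltac:(lra)) as B.
  pose proof (P_pos a N T) as HP.
  apply Rlt_le_trans with (clearing_price a N T * (1 - a * (T + d - T) / T) * (c + d)).
  2: apply Rmult_le_compat_r; lra.
  replace (a * (T + d - T) / T) with (a * d / T) by (field; lra).
  assert (a * c / T <= a) by (apply Rmult_le_reg_r with T; [lra|]; unfold Rdiv; rewrite Rmult_assoc, Rinv_l; nra).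
  assert (a * d / T < 1 - a) by (apply Rmult_lt_reg_r with T; [lra|]; unfold Rdiv; rewrite Rmult_assoc, Rinv_l; nra).
  assert (E : clearing_price a N T * (1 - a * d / T) * (c + d) - clearing_price a N T * c
     = clearing_price a N T * d * (1 - a * c / T - a * d / T)) by (field; lra).
  assert (0 < clearing_price a N T * d * (1 - a * c / T - a * d / T)).
  { apply Rmult_lt_0_compat; [apply Rmult_lt_0_compat|]; lra. }
  lra.
Qed.

Lemma le_div_mul d p q : 0 < q -> d <= p / q -> d * q <= p.
Proof.
  intros Hq H. apply Rmult_le_compat_r with (r := q) in H; [|lra].
  replace (p / q * q) with p in H by (field; lra). exact H.
Qed.


Lemma dev_R2 Nm Nf lam a R0 m s m' s' :
  0 < Nm -> 0 < Nf -> 1 < lam -> 0 < a < 1 -> 0 < R0 ->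
  0 < m -> 0 <= s -> 0 <= m' -> 0 <= s' ->
  ~ (Nf * ((m + m') * R0) <= Nm * (lam * (s + s') * R0)) ->
  exists d, 0 < d /\ d <= m /\
    revenue Nm Nf lam a R0 m s m' s' < revenue Nm Nf lam a R0 (m - d) (s + d) m' s'.
Proof.
  intros HNm HNf Hlam Ha HR0 Hm Hs Hm' Hs' HR2.
  set (g := Nf * ((m + m') * R0) - Nm * (lam * (s + s') * R0)).
  assert (Hg : 0 < g) by (unfold g; lra).
  set (T := (m + m') * R0 + lam * (s + s') * R0).
  assert (HT : 0 < T) by (unfold T; assert (0 < (m+m')*R0) by (apply Rmult_lt_0_compat; lra); assert (0 <= lam*(s+s')*R0) by (apply Rmult_le_pos; [apply Rmult_le_pos|]; lra); lra).
  assert (Hk : 0 < (Nf + Nm * lam) * R0) by (apply Rmult_lt_0_compat; nra).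

  assert (Hk2 : 0 < a * (lam - 1) * R0) by (apply Rmult_lt_0_compat; [apply Rmult_lt_0_compat|]; lra).
  destruct (small4 m (g / (2 * ((Nf + Nm * lam) * R0))) ((1 - a) * T / (2 * (a * (lam - 1) * R0))) 1)
    as [d [Hd [Hd1 [Hd2 [Hd3 _]]]]]; try lra.
  { apply Rdiv_lt_0_compat; lra. }
  { apply Rdiv_lt_0_compat; nra. }
  exists d. split; [lra|]. split; [lra|].
  assert (Hd2' : d * (2 * ((Nf + Nm * lam) * R0)) <= g).
  { apply le_div_mul; lra. }
  assert (Hd3' : d * (2 * (a * (lam - 1) * R0)) <= (1 - a) * T).
  { apply le_div_mul; lra. }

  unfold revenue.
  destruct (Rle_dec (Nf * ((m + m') * R0)) (Nm * (lam * (s + s') * R0))) as [C|_]; [contradiction|].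
  destruct (Rle_dec (Nf * ((m - d + m') * R0)) (Nm * (lam * (s + d + s') * R0))) as [C|_].
  { exfalso. unfold g in Hd2'. nra. }
  replace ((m - d + m') * R0 + lam * (s + d + s') * R0) with (T + (lam - 1) * d * R0) by (unfold T; ring).
  replace ((m - d) * R0 + lam * (s + d) * R0) with ((m * R0 + lam * s * R0) + (lam - 1) * d * R0) by ring.
  fold T.
  apply pool_gain; try lra.
  - unfold T. assert (0 <= m' * R0) by (apply Rmult_le_pos; lra).
    assert (0 <= lam * s' * R0) by (apply Rmult_le_pos; [apply Rmult_le_pos|]; lra).
    assert (0 <= lam * s * R0) by (apply Rmult_le_pos; [apply Rmult_le_pos|]; lra).
    assert (0 <= m * R0) by (apply Rmult_le_pos; lra).
    split; nra.

  - apply Rmult_lt_0_compat; [|lra]. apply Rmult_lt_0_compat; lra.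
  - nra.
Qed.


Lemma pos3 x y z : 0 < x -> 0 < y -> 0 < z -> 0 < x * y * z.
Proof. intros. repeat apply Rmult_lt_0_compat; lra. Qed.
Lemma nneg3 x y z : 0 <= x -> 0 <= y -> 0 <= z -> 0 <= x * y * z.
Proof. intros. repeat apply Rmult_le_pos; lra. Qed.

Lemma dev_full Nm Nf lam a R0 m s m' s' e :
  0 < Nm -> 0 < Nf -> 0 < lam -> 0 < a < 1 -> 0 < R0 ->
  0 <= s -> 0 < s' -> 0 < e ->
  Nf * ((m + m') * R0) <= Nm * (lam * (s + s') * R0) ->
  exists d, 0 < d /\ d <= e /\
    revenue Nm Nf lam a R0 m s m' s' < revenue Nm Nf lam a R0 m (s + d) m' s'.
Proof.
  intros HNm HNf Hlam Ha HR0 Hs Hs' He HR1.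
  destruct (small4 e ((1 - a) * (s + s') / (2 * a)) 1 1) as [d [Hd [Hd1 [Hd2 _]]]]; try lra.
  { apply Rdiv_lt_0_compat; nra. }
  exists d. split; [lra|]. split; [lra|].
  apply le_div_mul in Hd2; [|lra].
  unfold revenue.
  destruct (Rle_dec (Nf * ((m + m') * R0)) (Nm * (lam * (s + s') * R0))) as [_|C]; [|contradiction].
  destruct (Rle_dec (Nf * ((m + m') * R0)) (Nm * (lam * (s + d + s') * R0))) as [_|C].
  2: { exfalso. apply C. assert (0 <= Nm * (lam * d * R0)) by (apply Rmult_le_pos; [lra|apply nneg3; lra]).
       replace (Nm * (lam * (s + d + s') * R0)) with (Nm * (lam * (s + s') * R0) + Nm * (lam * d * R0)) by ring.
       lra. }
  apply Rplus_lt_compat_l.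
  replace (lam * (s + d + s') * R0) with (lam * (s + s') * R0 + lam * d * R0) by ring.
  replace (lam * (s + d) * R0) with (lam * s * R0 + lam * d * R0) by ring.
  apply pool_gain; try lra.
  - apply pos3; lra.
  - split; [apply nneg3; lra|]. assert (0 <= lam * s' * R0) by (apply nneg3; lra). nra.
  - apply pos3; lra.
  - assert (0 < lam * R0) by (apply Rmult_lt_0_compat; lra).
    replace (a * (lam * d * R0)) with ((lam * R0) * (a * d)) by ring.
    replace ((1 - a) * (lam * (s + s') * R0)) with ((lam * R0) * ((1 - a) * (s + s'))) by ring.
    apply Rmult_lt_compat_l; nra.
Qed.

Lemma dev_toMacro Nm Nf lam a R0 m s m' s' X Y e :
  0 < Nm -> 0 < Nf -> 0 < lam -> 0 < a < 1 -> 0 < R0 ->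
  X = m + m' -> Y = s + s' -> 0 < X -> 0 < Y -> 0 <= m -> 0 < e -> e <= s ->
  Nf * (X * R0) < Nm * (lam * Y * R0) ->
  let pM := clearing_price a Nm (X * R0) in
  let pS := clearing_price a Nf (lam * Y * R0) in
  0 < pM * (X - a * m) / X - pS * lam * (Y - a * s) / Y ->
  exists d, 0 < d /\ d <= e /\
    revenue Nm Nf lam a R0 m s m' s' < revenue Nm Nf lam a R0 (m + d) (s - d) m' s'.
Proof.
  intros HNm HNf Hlam Ha HR0 HX HY HX0 HY0 Hm He Hes HR1 pM pS HD.
  set (D := pM * (X - a * m) / X - pS * lam * (Y - a * s) / Y) in *.
  set (E := a * (pM / X + pS * lam / Y)).
  assert (HE : 0 < E).
  { unfold E. apply Rmult_lt_0_compat; [lra|]. apply Rplus_lt_0_compat.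
    - apply Rdiv_lt_0_compat; [apply P_pos|lra].
    - apply Rdiv_lt_0_compat; [|lra]. apply Rmult_lt_0_compat; [apply P_pos|lra]. }
  set (g := Nm * (lam * Y * R0) - Nf * (X * R0)).
  assert (Hk : 0 < (Nf + Nm * lam) * R0) by (apply Rmult_lt_0_compat; nra).
  destruct (small4 e (Y / 2) (g / ((Nf + Nm * lam) * R0)) (D / (2 * E))) as [d [Hd [Hd1 [Hd2 [Hd3 Hd4]]]]]; try lra.
  { apply Rdiv_lt_0_compat; unfold g; lra. }
  { apply Rdiv_lt_0_compat; lra. }
  exists d. split; [lra|]. split; [lra|].
  apply le_div_mul in Hd3; [|lra]. apply le_div_mul in Hd4; [|lra].
  pose proof (shift_R1 Nm Nf lam a R0 m s m' s' X Y d HNm HNf Hlam ltac:(lra) HR0 HX HY HX0 HY0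
    ltac:(lra) ltac:(lra) ltac:(lra) ltac:(lra) ltac:(lra) ltac:(unfold g in Hd3; nra)) as Hs.
  simpl in Hs. fold pM pS in Hs. fold D E in Hs.
  assert (0 < d * R0 * D - d * d * R0 * E).
  { replace (d * R0 * D - d * d * R0 * E) with ((d * R0) * (D - d * E)) by ring.
    apply Rmult_lt_0_compat; [apply Rmult_lt_0_compat; lra|nra]. }
  lra.
Qed.

Lemma dev_toSmall Nm Nf lam a R0 m s m' s' X Y :
  0 < Nm -> 0 < Nf -> 0 < lam -> 0 < a < 1 -> 0 < R0 ->
  X = m + m' -> Y = s + s' -> 0 < Y -> 0 < m -> 0 <= m' -> 0 <= s ->
  Nf * (X * R0) <= Nm * (lam * Y * R0) ->
  let pM := clearing_price a Nm (X * R0) in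
  let pS := clearing_price a Nf (lam * Y * R0) in
  pM * (X - a * m) / X - pS * lam * (Y - a * s) / Y < 0 ->
  exists d, 0 < d /\ d <= m /\
    revenue Nm Nf lam a R0 m s m' s' < revenue Nm Nf lam a R0 (m - d) (s + d) m' s'.
Proof.
  intros HNm HNf Hlam Ha HR0 HX HY HY0 Hm Hm' Hs HR1 pM pS HD.
  assert (HX0 : 0 < X) by lra.
  set (D := pM * (X - a * m) / X - pS * lam * (Y - a * s) / Y) in *.
  set (E := a * (pM / X + pS * lam / Y)).
  assert (HE : 0 < E).
  { unfold E. apply Rmult_lt_0_compat; [lra|]. apply Rplus_lt_0_compat.
    - apply Rdiv_lt_0_compat; [apply P_pos|lra].
    - apply Rdiv_lt_0_compat; [|lra]. apply Rmult_lt_0_compat; [apply P_pos|lra]. }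
  destruct (small4 (m / 2) (- D / (2 * E)) 1 1) as [d [Hd [Hd1 [Hd2 _]]]]; try lra.
  { apply Rdiv_lt_0_compat; lra. }
  exists d. split; [lra|]. split; [lra|].
  apply le_div_mul in Hd2; [|lra].
  assert (HR1' : Nf * ((X + - d) * R0) <= Nm * (lam * (Y - - d) * R0)).
  { assert (0 <= Nf * (d * R0)) by (apply Rmult_le_pos; [lra|apply Rmult_le_pos; lra]).
    assert (0 <= Nm * (lam * d * R0)) by (apply Rmult_le_pos; [lra|apply nneg3; lra]).
    replace (Nf * ((X + - d) * R0)) with (Nf * (X * R0) - Nf * (d * R0)) by ring.
    replace (Nm * (lam * (Y - - d) * R0)) with (Nm * (lam * Y * R0) + Nm * (lam * d * R0)) by ring.
    lra. }
  pose proof (shift_R1 Nm Nf lam a R0 m s m' s' X Y (- d) HNm HNf Hlam ltac:(lra) HR0 HX HY HX0 HY0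
    ltac:(lra) ltac:(lra) ltac:(lra) ltac:(lra) HR1 HR1') as Hs0.
  simpl in Hs0. fold pM pS in Hs0. fold D E in Hs0.
  replace (m + - d) with (m - d) in Hs0 by ring.
  replace (s - - d) with (s + d) in Hs0 by ring.
  assert (0 < - d * R0 * D - - d * - d * R0 * E).
  { replace (- d * R0 * D - - d * - d * R0 * E) with ((d * R0) * (- D - d * E)) by ring.
    apply Rmult_lt_0_compat; [apply Rmult_lt_0_compat; lra|nra]. }
  lra.
Qed.


Lemma dev_degen Nm Nf lam a R0 s s' e :
  0 < Nm -> 0 < Nf -> 0 < lam -> 0 < a < 1 -> 0 < R0 ->
  0 <= s' -> 0 < e -> e <= s ->
  exists d, 0 < d /\ d <= e /\
    revenue Nm Nf lam a R0 0 s 0 s' < revenue Nm Nf lam a R0 (0 + d) (s - d) 0 s'.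
Proof.
  intros HNm HNf Hlam Ha HR0 Hs' He Hes.
  set (Y := s + s').
  assert (HY : 0 < Y) by (unfold Y; lra).
  set (pS := clearing_price a Nf (lam * Y * R0)).
  set (L := ln (pS * lam) / a).
  assert (HeL : 0 < exp L) by apply exp_pos.
  assert (Hk : 0 < (Nf + Nm * lam) * R0) by (apply Rmult_lt_0_compat; nra).
  destruct (small4 e (Y / 2) (Nm * (lam * Y * R0) / ((Nf + Nm * lam) * R0)) (Nm / (2 * R0 * exp L)))
    as [d [Hd [Hd1 [Hd2 [Hd3 Hd4]]]]]; try lra.
  { apply Rdiv_lt_0_compat; [apply Rmult_lt_0_compat; [lra|apply pos3; lra]|lra]. }
  { apply Rdiv_lt_0_compat; [lra|apply pos3; lra]. }
  exists d. split; [lra|]. split; [lra|].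
  apply le_div_mul in Hd3; [|lra]. apply le_div_mul in Hd4; [|apply pos3; lra].
  assert (HpM : pS * lam < clearing_price a Nm ((d + 0) * R0)).
  { unfold clearing_price, Rpower.
    assert (HpSl : 0 < pS * lam) by (apply Rmult_lt_0_compat; [apply P_pos|lra]).
    rewrite <- (exp_ln (pS * lam)) at 1 by exact HpSl.
    apply exp_increasing.
    assert (Hq : exp L < Nm / ((d + 0) * R0)).
    { replace ((d + 0) * R0) with (d * R0) by ring.
      apply Rmult_lt_reg_r with (d * R0); [apply Rmult_lt_0_compat; lra|].
      replace (Nm / (d * R0) * (d * R0)) with Nm by (field; lra).
      assert (exp L * (d * R0) * 2 <= Nm) by (rewrite <- Hd4; right; ring).
      nra. }
    apply ln_increasing in Hq; [|exact HeL].
    rewrite ln_exp in Hq. unfold L in Hq.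
    apply Rmult_lt_compat_l with (r := a) in Hq; [|lra].
    replace (a * (ln (pS * lam) / a)) with (ln (pS * lam)) in Hq by (field; lra).
    exact Hq. }
  pose proof (bern a Nf (lam * Y * R0) (lam * (Y - d) * R0) ltac:(lra) HNf ltac:(apply pos3; lra) ltac:(apply pos3; lra)) as B.
  fold pS in B.
  replace (pS * (1 - a * (lam * (Y - d) * R0 - lam * Y * R0) / (lam * Y * R0))) with (pS * (1 + a * d / Y)) in B by (field; repeat split; lra).
  assert (0 <= a * d / Y) by (apply Rmult_le_pos; [nra|left; apply Rinv_0_lt_compat; lra]).
  assert (HpS : 0 < pS) by apply P_pos.
  assert (B' : pS <= clearing_price a Nf (lam * (Y - d) * R0)) by nra.
  unfold revenue.
  replace (s - d + s') with (Y - d) by (unfold Y; ring). fold Y.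
  destruct (Rle_dec (Nf * ((0 + 0) * R0)) (Nm * (lam * Y * R0))) as [_|C].
  2: { exfalso; apply C. replace ((0 + 0) * R0) with 0 by ring. rewrite Rmult_0_r.
       apply Rmult_le_pos; [lra|apply nneg3; lra]. }
  destruct (Rle_dec (Nf * ((0 + d + 0) * R0)) (Nm * (lam * (Y - d) * R0))) as [_|C].
  2: { exfalso; apply C. replace (0 + d + 0) with d by ring. nra. }
  replace (0 + d + 0) with (d + 0) by ring. fold pS.
  replace (0 * R0) with 0 by ring.
  assert (clearing_price a Nf (lam * (Y - d) * R0) * (lam * (s - d) * R0) >= pS * (lam * (s - d) * R0)).
  { apply Rle_ge, Rmult_le_compat_r; [apply nneg3; lra|exact B']. }
  assert (pS * lam * (d * R0) < clearing_price a Nm ((d + 0) * R0) * (d * R0)).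
  { apply Rmult_lt_compat_r; [apply Rmult_lt_0_compat; lra|exact HpM]. }
  replace ((0 + d) * R0) with (d * R0) by ring.
  assert (pS * (lam * s * R0) = pS * (lam * (s - d) * R0) + pS * lam * (d * R0)) by ring.
  lra.
Qed.


Lemma ln_div x y : 0 < x -> 0 < y -> ln (x / y) = ln x - ln y.
Proof. intros. unfold Rdiv. rewrite ln_mult, ln_Rinv; try lra. apply Rinv_0_lt_compat; lra. Qed.

Lemma price_identity Nm Nf lam a R0 X Y :
  0 < Nm -> 0 < Nf -> 0 < lam -> 0 < a -> 0 < R0 -> 0 < X -> 0 < Y ->
  clearing_price a Nm (X * R0) = clearing_price a Nf (lam * Y * R0) * lam ->
  Nm * Y = Nf * Rpower lam (1 / a - 1) * X.
Proof.
  intros HNm HNf Hlam Ha HR0 HX HY H.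
  unfold clearing_price, Rpower in *.
  assert (H' : a * ln (Nm / (X * R0)) = a * ln (Nf / (lam * Y * R0)) + ln lam).
  { apply exp_inv. rewrite exp_plus, exp_ln by lra. exact H. }
  clear H. rename H' into H.

  rewrite !ln_div in H; try (apply pos3 || apply Rmult_lt_0_compat); try lra.
  rewrite !ln_mult in H; try (apply Rmult_lt_0_compat); try lra.
  apply ln_inv.
  - apply Rmult_lt_0_compat; lra.
  - apply Rmult_lt_0_compat; [apply Rmult_lt_0_compat; [lra|apply exp_pos]|lra].
  - rewrite !ln_mult; try lra; try apply exp_pos; try (apply Rmult_lt_0_compat; [lra|apply exp_pos]).
    rewrite ln_exp.
    apply Rmult_eq_reg_l with a; [|lra].
    replace (a * (ln Nf + (1 / a - 1) * ln lam + ln X)) with (a * ln Nf + (1 - a) * ln lam + a * ln X) by (field; lra).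
    lra.
Qed.


Theorem proposition2
  (Nm Nf lam alpha R0 B1 B2 B1S0 B2S0 : R)
  (HNm : 0 < Nm) (HNf : 0 < Nf) (Hlam : 1 < lam)
  (Halpha0 : 0 < alpha) (Halpha1 : alpha < 1) (HR0 : 0 < R0)
  (HB1 : 0 < B1) (HB2 : 0 < B2)
  (HB1S0 : 0 <= B1S0 <= B1) (HB2S0 : 0 <= B2S0 <= B2)
  (Hviol1 : B1S0 <= BS_NE Nm Nf lam alpha B1)
  (Hviol2 : BS_NE Nm Nf lam alpha B2 < B2S0)
  (B1M B1S B2M B2S : R)
  (HNE : constrained_NE Nm Nf lam alpha R0 B1 B2 B1S0 B2S0 B1M B1S B2M B2S) :
  (B1S = B1S0 /\ B2S = B2S0) \/ (B1S0 < B1S /\ B2S = B2S0).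
Proof.
  destruct HNE as [[Ha [Hb Hab]] [[Hx [Hy Hxy]] [NE1 NE2]]].
  unfold BS_NE in Hviol1, Hviol2.
  set (c := Rpower lam (1 / alpha - 1)) in *.
  assert (Hc : 0 < c) by (unfold c, Rpower; apply exp_pos).
  assert (Hfc : 0 < Nf * c) by (apply Rmult_lt_0_compat; lra).
  assert (Hden : 0 < Nf * c + Nm) by lra.
  assert (Hv1 : B1S0 * (Nf * c + Nm) <= Nf * c * B1).
  { apply Rmult_le_compat_r with (r := Nf * c + Nm) in Hviol1; [|lra].
    replace (Nf * c * B1 / (Nf * c + Nm) * (Nf * c + Nm)) with (Nf * c * B1) in Hviol1 by (field; lra).
    exact Hviol1. }
  assert (Hv2 : Nf * c * B2 < B2S0 * (Nf * c + Nm)).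
  { apply Rmult_lt_compat_r with (r := Nf * c + Nm) in Hviol2; [|lra].
    replace (Nf * c * B2 / (Nf * c + Nm) * (Nf * c + Nm)) with (Nf * c * B2) in Hviol2 by (field; lra).
    exact Hviol2. }
  clear Hviol1 Hviol2.
  assert (Ha01 : 0 < alpha < 1) by lra.
  assert (Hlam0 : 0 < lam) by lra.
  assert (HB2S0p : 0 < B2S0) by nra.
  assert (Hy2 : B2S = B2S0).
  { apply Rle_antisym; [|exact Hy]. apply Rnot_lt_le. intro Hgt.
    assert (Hy0 : 0 < B2S) by lra.
    assert (Hkey : Nf * c * B2M < Nm * B2S) by nra.
    assert (Hb0 : 0 <= B1S) by lra.
    destruct (Rle_dec (Nf * ((B2M + B1M) * R0)) (Nm * (lam * (B2S + B1S) * R0))) as [HR1|HR2].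
    2: {
      destruct (Rle_lt_or_eq_dec _ _ Hx) as [Hx0|Hx0].
      - destruct (dev_R2 Nm Nf lam alpha R0 B2M B2S B1M B1S HNm HNf Hlam Ha01 HR0 Hx0 ltac:(lra) Ha Hb0 HR2)
          as [d [Hd [Hdm Hg]]].
        specialize (NE2 (B2M - d) (B2S + d) ltac:(repeat split; lra)). lra.
      - destruct (Rle_lt_or_eq_dec _ _ Ha) as [Ha0|Ha0].
        + assert (HR2' : ~ (Nf * ((B1M + B2M) * R0) <= Nm * (lam * (B1S + B2S) * R0))).
          { rewrite (Rplus_comm B1M), (Rplus_comm B1S); exact HR2. }
          destruct (dev_R2 Nm Nf lam alpha R0 B1M B1S B2M B2S HNm HNf Hlam Ha01 HR0 Ha0 Hb0 Hx ltac:(lra) HR2')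
            as [d [Hd [Hdm Hg]]].
          specialize (NE1 (B1M - d) (B1S + d) ltac:(repeat split; lra)). lra.
        + exfalso. apply HR2. rewrite <- Hx0, <- Ha0.
          replace ((0 + 0) * R0) with 0 by ring. rewrite Rmult_0_r.
          apply Rmult_le_pos; [lra|apply nneg3; lra]. }
    assert (HX0 : 0 < B1M + B2M \/ (B1M = 0 /\ B2M = 0)) by lra.
    destruct HX0 as [HX0|[Ha0 Hx0]].
    2: { rewrite Ha0, Hx0 in NE2.
         destruct (dev_degen Nm Nf lam alpha R0 B2S B1S (B2S - B2S0) HNm HNf Hlam0 Ha01 HR0 Hb0 ltac:(lra) ltac:(lra))
           as [d [Hd [Hde Hg]]].
         specialize (NE2 (0 + d) (B2S - d) ltac:(repeat split; lra)). lra. }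
    set (X := B1M + B2M) in *.
    set (Y := B1S + B2S).
    assert (HY0 : 0 < Y) by (unfold Y; lra).
    assert (HX2 : X = B2M + B1M) by (unfold X; ring).
    assert (HY2 : Y = B2S + B1S) by (unfold Y; ring).
    assert (HX1 : X = B1M + B2M) by reflexivity.
    assert (HY1 : Y = B1S + B2S) by reflexivity.
    assert (HR : Nf * (X * R0) <= Nm * (lam * Y * R0)) by (rewrite HX2, HY2; exact HR1).
    set (pM := clearing_price alpha Nm (X * R0)).
    set (pS := clearing_price alpha Nf (lam * Y * R0)).
    assert (HpM : 0 < pM) by apply P_pos.
    assert (HpS : 0 < pS) by apply P_pos.
    set (u := pM / X). set (v := pS * lam / Y).
    assert (Hu : 0 < u) by (apply Rdiv_lt_0_compat; lra).
    assert (Hv : 0 < v) by (apply Rdiv_lt_0_compat; [apply Rmult_lt_0_compat|]; lra).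
    set (A := u * B1M - v * B1S). set (Z := u * B2M - v * B2S). set (W := u * X - v * Y).
    assert (HW : W = A + Z) by (unfold W, A, Z, X, Y; ring).
    assert (HD1 : pM * (X - alpha * B1M) / X - pS * lam * (Y - alpha * B1S) / Y = W - alpha * A)
      by (unfold W, A, u, v; field; lra).
    assert (HD2 : pM * (X - alpha * B2M) / X - pS * lam * (Y - alpha * B2S) / Y = W - alpha * Z)
      by (unfold W, Z, u, v; field; lra).
    assert (Fmac2 : 0 < B2M -> 0 <= W - alpha * Z).
    { intro Hx0. apply Rnot_lt_le. intro Hneg. rewrite <- HD2 in Hneg.
      destruct (dev_toSmall Nm Nf lam alpha R0 B2M B2S B1M B1S X Y HNm HNf Hlam0 Ha01 HR0 HX2 HY2 HY0 Hx0 Ha ltac:(lra) HR Hneg)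
        as [d [Hd [Hdm Hg]]].
      specialize (NE2 (B2M - d) (B2S + d) ltac:(repeat split; lra)). lra. }
    assert (Fmac1 : 0 < B1M -> 0 <= W - alpha * A).
    { intro Ha0. apply Rnot_lt_le. intro Hneg. rewrite <- HD1 in Hneg.
      destruct (dev_toSmall Nm Nf lam alpha R0 B1M B1S B2M B2S X Y HNm HNf Hlam0 Ha01 HR0 HX1 HY1 HY0 Ha0 Hx ltac:(lra) HR Hneg)
        as [d [Hd [Hdm Hg]]].
      specialize (NE1 (B1M - d) (B1S + d) ltac:(repeat split; lra)). lra. }
    destruct (Rle_lt_or_eq_dec _ _ HR) as [HRs|HRb].
    +
      assert (Fsm2 : W - alpha * Z <= 0).
      { apply Rnot_lt_le. intro Hpos. rewrite <- HD2 in Hpos.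
        destruct (dev_toMacro Nm Nf lam alpha R0 B2M B2S B1M B1S X Y (B2S - B2S0) HNm HNf Hlam0 Ha01 HR0 HX2 HY2 HX0 HY0 Hx ltac:(lra) ltac:(lra) HRs Hpos)
          as [d [Hd [Hde Hg]]].
        specialize (NE2 (B2M + d) (B2S - d) ltac:(repeat split; lra)). lra. }
      assert (Fsm1 : B1S0 < B1S -> W - alpha * A <= 0).
      { intro Hb1. apply Rnot_lt_le. intro Hpos. rewrite <- HD1 in Hpos.
        destruct (dev_toMacro Nm Nf lam alpha R0 B1M B1S B2M B2S X Y (B1S - B1S0) HNm HNf Hlam0 Ha01 HR0 HX1 HY1 HX0 HY0 Ha ltac:(lra) ltac:(lra) HRs Hpos)
          as [d [Hd [Hde Hg]]].
        specialize (NE1 (B1M + d) (B1S - d) ltac:(repeat split; lra)). lra. }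
      assert (Full1 : B1M + B1S = B1).
      { apply Rle_antisym; [exact Hab|]. apply Rnot_lt_le. intro Hlt.
        destruct (dev_full Nm Nf lam alpha R0 B1M B1S B2M B2S (B1 - B1M - B1S) HNm HNf Hlam0 Ha01 HR0 Hb0 Hy0 ltac:(lra) HR)
          as [d [Hd [Hde Hg]]].
        specialize (NE1 B1M (B1S + d) ltac:(repeat split; lra)). lra. }
      destruct (Rle_lt_or_eq_dec _ _ Hb) as [Hb1|Hb1].
      * specialize (Fsm1 Hb1).
        destruct (Rle_lt_or_eq_dec _ _ Ha) as [Ha0|Ha0].
        -- specialize (Fmac1 Ha0).
           destruct (Rle_lt_or_eq_dec _ _ Hx) as [Hx0|Hx0].
           ++ specialize (Fmac2 Hx0).
              assert (HAZ : alpha * A = alpha * Z) by lra.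
              apply Rmult_eq_reg_l in HAZ; [|lra].
              assert (HA0 : A = 0) by nra.
              assert (HZ0 : Z = 0) by lra.
              assert (HW0 : W = 0) by lra.
              assert (HpMe : pM = pS * lam).
              { assert (u * X = v * Y) by (unfold W in HW0; lra).
                unfold u, v in H. replace (pM / X * X) with pM in H by (field; lra).
                replace (pS * lam / Y * Y) with (pS * lam) in H by (field; lra). exact H. }
              pose proof (price_identity Nm Nf lam alpha R0 X Y HNm HNf Hlam0 Halpha0 HR0 HX0 HY0 HpMe) as Hid.
              fold c in Hid.
              assert (HE : pM / X * B2M = pM / Y * B2S).
              { assert (u * B2M = v * B2S) by (unfold Z in HZ0; lra).
                unfold u, v in H. rewrite <- HpMe in H. exact H. }
              assert (HE2 : B2M * Y = B2S * X).
              { replace (B2M * Y) with ((pM / X * B2M) * (X * Y / pM)) by (field; lra).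
                rewrite HE. field; lra. }
              assert (Nm * B2S * X = Nf * c * B2M * X).
              { replace (Nm * B2S * X) with (Nm * (B2S * X)) by ring. rewrite <- HE2.
                replace (Nm * (B2M * Y)) with (B2M * (Nm * Y)) by ring. rewrite Hid. ring. }
              nra.
           ++ assert (HZn : Z < 0) by (unfold Z; rewrite <- Hx0; nra).
              assert (HAZ : A <= Z).
              { apply Rmult_le_reg_l with alpha; [lra|]. lra. }
              assert (HA1 : (1 - alpha) * A = - Z) by lra.
              assert (HA2 : (1 - alpha) * A <= (1 - alpha) * Z) by (apply Rmult_le_compat_l; lra).
              nra.

        -- assert (HAn : A < 0) by (unfold A; rewrite <- Ha0; nra).
           assert (Hx0 : 0 < B2M) by (unfold X in HX0; lra).
           specialize (Fmac2 Hx0).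
           assert (H1 : (1 - alpha) * Z = - A) by lra.
           assert (HZp : 0 < Z).
           { apply Rmult_lt_reg_l with (1 - alpha); lra. }
           assert (0 < alpha * Z) by (apply Rmult_lt_0_compat; lra).
           assert (alpha * A < 0) by (apply Rmult_lt_0_compat with (r1 := alpha) (r2 := - A) in Halpha0; lra).
           lra.

      * assert (Ha0 : 0 < B1M).
        { destruct (Rle_lt_or_eq_dec _ _ Ha) as [Ha0|Ha0]; [exact Ha0|].
          exfalso. rewrite <- Ha0 in Full1. nra. }
        specialize (Fmac1 Ha0).
        assert (HZ : 0 <= Z).
        { apply Rnot_lt_le. intro HZ.
          assert (H1 : A + (1 - alpha) * Z <= 0) by lra.
          assert (H2 : (1 - alpha) * A + Z >= 0) by lra.
          assert (H3 : (1 - alpha) * A <= - (1 - alpha) * (1 - alpha) * Z).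
          { replace (- (1 - alpha) * (1 - alpha) * Z) with ((1 - alpha) * (- (1 - alpha) * Z)) by ring.
            apply Rmult_le_compat_l; lra. }
          assert (H4 : 0 < alpha * (2 - alpha) * (- Z)) by (apply pos3; lra).
          nra. }
        assert (HA : A <= 0) by nra.
        unfold A in HA. unfold Z in HZ.
        assert (Hb1p : 0 < B1S).
        { assert (0 < u * B1M) by (apply Rmult_lt_0_compat; lra). nra. }
        assert (Hcross : v * B2S * (u * B1M) <= u * B2M * (v * B1S)).
        { apply Rmult_le_compat; try nra. }
        assert (Hcr : B2S * B1M <= B2M * B1S).
        { assert (0 < u * v) by (apply Rmult_lt_0_compat; lra).
          apply Rmult_le_reg_l with (u * v); [lra|]. nra. }
        assert (Hb1c : Nm * B1S <= Nf * c * B1M).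
        { rewrite Hb1 in Hv1. rewrite <- Full1 in Hv1. lra. }
        assert (Q1 : Nf * c * B2M * B1S < Nm * B2S * B1S) by (apply Rmult_lt_compat_r; lra).
        assert (Q2 : Nf * c * (B2S * B1M) <= Nf * c * (B2M * B1S)) by (apply Rmult_le_compat_l; lra).
        assert (Q3 : Nm * B1S * B2S <= Nf * c * B1M * B2S) by (apply Rmult_le_compat_r; lra).
        nra.
    +
      assert (HpMS : pM = pS).
      { unfold pM, pS, clearing_price. f_equal.
        assert (0 < lam * Y * R0) by (apply pos3; lra).
        assert (0 < X * R0) by (apply Rmult_lt_0_compat; lra).
        replace (Nm / (X * R0)) with (Nm * (lam * Y * R0) / ((X * R0) * (lam * Y * R0))) by (field; lra).
        rewrite <- HRb. field; lra. }

      assert (HWn : W < 0).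
      { unfold W, u, v. replace (pM / X * X) with pM by (field; lra).
        replace (pS * lam / Y * Y) with (pS * lam) by (field; lra). rewrite HpMS. nra. }
      destruct (Rle_lt_or_eq_dec _ _ Ha) as [Ha0|Ha0];
      destruct (Rle_lt_or_eq_dec _ _ Hx) as [Hx0|Hx0].
      * specialize (Fmac1 Ha0). specialize (Fmac2 Hx0). nra.
      * specialize (Fmac1 Ha0). assert (Z <= 0) by (unfold Z; rewrite <- Hx0; nra). nra.
      * specialize (Fmac2 Hx0). assert (A <= 0) by (unfold A; rewrite <- Ha0; nra). nra.
      * exfalso. unfold X in HX0. lra.
  }
  destruct (Rle_lt_or_eq_dec _ _ Hb) as [Hlt|Heq].
  - right; split; assumption.
  - left; split; [symmetry; exact Heq|exact Hy2].
Qed.
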